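(* Assume (A1) and (A2) below. Then for any policy $\pi$ and any $s\in\mathcal S$, the posterior variance of the value function $U_t^\pi(s)=\mathbb{V}_{p\sim\Phi_t}\big[V^{\pi,p}(s)\big]$ satisfies the uncertainty Bellman equation $$U_t^\pi(s)=\gamma^2u_t(s)+\gamma^2\sum_{a,s'}\pi(a\mid s)\,\bar p_t(s'\mid s,a)\,U_t^\pi(s'),$$ where the local uncertainty is $$u_t(s)=\mathbb{V}_{a,s'\sim\pi,\bar p_t}\big[\bar V_t^\pi(s')\big]-\mathbb{E}_{p\sim\Phi_t}\Big[\mathbb{V}_{a,s'\sim\pi,p}\big[V^{\pi,p}(s')\big]\Big].$$
   Context: Let $\mathcal S$ be a finite state space, $\mathcal A$ a finite action space, $r:\mathcal S\times\mathcal A\to\mathbb R$ a known bounded (deterministic) reward function and $\gamma\in[0,1)$ a discount factor. A transition function $p$ assigns to each $(s,a)$ a probability distribution $p(\cdot\mid s,a)$ on $\mathcal S$. A policy $\pi$ gives distributions $\pi(\cdot\mid s)$ on $\mathcal A$. For a transition function $p$, the value function is $V^{\pi,p}(s)=\mathbb E\big[\sum_{h\ge 0}\gamma^h r(s_h,a_h)\mid s_0=s\big]$ with $a_h\sim\pi(\cdot\mid s_h)$, $s_{h+1}\sim p(\cdot\mid s_h,a_h)$. The transition function $p$ is a random variable with (posterior) distribution $\Phi_t$. Define $\bar p_t(s'\mid s,a)=\mathbb E_{p\sim\Phi_t}[p(s'\mid s,a)]$ and $\bar V^\pi_t(s)=\mathbb E_{p\sim\Phi_t}[V^{\pi,p}(s)]$.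 For a transition function $q$ and a function $f$ on $\mathcal S$, $\mathbb V_{a,s'\sim\pi,q}[f(s')]$ denotes the variance of $f(s')$ when $a\sim\pi(\cdot\mid s)$ and $s'\sim q(\cdot\mid s,a)$. Assumptions: (A1) (independent transitions) $p(s'\mid x,a)$ and $p(s'\mid y,a)$ are independent random variables if $x\neq y$; (A2) (acyclic MDP) the MDP is a directed acyclic graph, i.e., states are not visited more than once in any given episode. *)

(* Defs.v *)
From HB Require Import structures.
From mathcomp Require Import all_boot all_order all_algebra.
From mathcomp Require Import all_classical all_reals all_analysis.
Set Implicit Arguments. Unset Strict Implicit. Unset Printing Implicit Defensive.
Import Order.TTheory GRing.Theory Num.Theory.
Local Open Scope classical_set_scope.
Local Open Scope ring_scope.

Section MDP.
Variables (R : realType) (S A : finType).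

(* a transition function: q s a s' = q(s' | s, a) *)
Definition trans := S -> A -> S -> R.
Definition policy := S -> A -> R.

Definition is_policy (pi : policy) :=
  (forall s a, 0 <= pi s a) /\ (forall s, \sum_(a : A) pi s a = 1).

Definition is_trans (q : trans) :=
  (forall s a s', 0 <= q s a s') /\ (forall s a, \sum_(s' : S) q s a s' = 1).

Definition step (pi : policy) (q : trans) (f : S -> R) : S -> R :=
  fun s => \sum_(a : A) pi s a * \sum_(s' : S) q s a s' * f s'.

Definition rpi (r : S -> A -> R) (pi : policy) : S -> R :=
  fun s => \sum_(a : A) pi s a * r s a.

(* V^{pi,q}(s) = E[ sum_h gamma^h r(s_h,a_h) | s_0 = s ]
              = sum_{h>=0} gamma^h E[r(s_h,a_h)], with E[r(s_h,a_h)] = (step^h rpi)(s) *)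
Definition value (r : S -> A -> R) (gamma : R) (pi : policy) (q : trans) : S -> R :=
  fun s => limn (fun n => \sum_(0 <= h < n) gamma ^+ h * iter h (step pi q) (rpi r pi) s).

Definition locvar (pi : policy) (q : trans) (f : S -> R) (s : S) : R :=
  step pi q (fun x => f x ^+ 2) s - (step pi q f s) ^+ 2.

End MDP.

Section Posterior.
Variables (R : realType) (d : measure_display) (Om : measurableType d)
  (Pr : probability Om R).

Definition Ex (X : Om -> R) : R := Rintegral Pr setT X.
Definition Var (X : Om -> R) : R := Ex (fun w => (X w - Ex X) ^+ 2).

Variables (S A : finType).

(* (A1): the rows p(.|x,.) , x in S, are mutually independent random
   variables: product rule on the generating pi-system of cylinder events
   (taking B = setT for some x gives every subfamily). *)
Definition indep_rows (P : Om -> trans R S A) :=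
  forall B : S -> A -> S -> set R, (forall x a s', measurable (B x a s')) ->
    let E x := [set w | forall a s', B x a s' (P w x a s')] in
    Pr (\bigcap_(x in [set: S]) E x) = (\prod_(x : S) fine (Pr (E x)))%:E.

(* There is a rank function strictly decreasing along every
   transition of positive probability, except at terminal states, which are
   absorbing with zero reward (for every sample of the posterior). *)
Definition acyclic (r : S -> A -> R) (P : Om -> trans R S A) :=
  exists (rho : S -> nat) (T : pred S),
    (forall s, T s -> forall w a, P w s a s = 1 /\ r s a = 0) /\
    (forall w s a s', ~~ T s -> 0 < P w s a s' -> (rho s' < rho s)%N).

End Posterior.

(* Main.v *)
Set Warnings "-notation-overridden,-ambiguous-paths,-notation-incompatible-prefix,-deprecated".
Set Implicit Arguments. Unset Strict Implicit.
Require Import Defs.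
From HB Require Import structures.
From mathcomp Require Import all_boot all_order all_algebra.
From mathcomp Require Import all_classical all_reals all_analysis.
From mathcomp Require Import measurable_realfun.
From mathcomp Require Import ring lra.
Import Order.TTheory GRing.Theory Num.Theory.
Local Open Scope classical_set_scope.
Local Open Scope ring_scope.
Section ExLemmas.
Variables (R : realType) (d : measure_display) (Om : measurableType d)
  (Pr : probability Om R).

Definition good (f : Om -> R) :=
  measurable_fun setT f /\ exists M, forall w, `|f w| <= M.

Lemma good_int f : good f -> Pr.-integrable setT (EFin \o f).
Proof.
move=> [mf [M hM]]; apply: measurable_bounded_integrable => //.
  by apply: (le_lt_trans (probability_le1 Pr measurableT)); rewrite ltry.
exists M; split; first exact: num_real.
move=> y hy x _ /=; apply: le_trans (hM x) _; exact: ltW.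
Qed.

Lemma good_cst c : good (fun _ => c).
Proof. by split; [exact: measurable_cst | exists `|c|]. Qed.

Lemma good_add f g : good f -> good g -> good (fun w => f w + g w).
Proof.
move=> [mf [M hM]] [mg [N hN]]; split; first exact: measurable_funD.
exists (M + N) => w; apply: le_trans (ler_normD _ _) _; exact: lerD.
Qed.

Lemma good_mul f g : good f -> good g -> good (fun w => f w * g w).
Proof.
move=> [mf [M hM]] [mg [N hN]]; split; first exact: measurable_funM.
exists (M * N) => w; rewrite normrM; apply: ler_pM => //.
Qed.

Lemma good_opp f : good f -> good (fun w => - f w).
Proof.
move=> [mf [M hM]]; split; first exact: measurableT_comp.
by exists M => w; rewrite normrN.
Qed.

Lemma good_sumr (I : Type) (r : seq I) (F : I -> Om -> R) :
  (forall i, good (F i)) -> good (fun w => \sum_(i <- r) F i w).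
Proof.
move=> hF; elim: r => [|i r IH] /=.
  under [X in good X]funext do rewrite big_nil; exact: good_cst.
under [X in good X]funext do rewrite big_cons; exact: good_add.
Qed.

Lemma good_sum (I : finType) (F : I -> Om -> R) :
  (forall i, good (F i)) -> good (fun w => \sum_i F i w).
Proof. by move=> hF; apply: good_sumr. Qed.

Definition Ex' := Ex Pr.

Lemma Ex_add f g : good f -> good g -> Ex Pr (fun w => f w + g w) = Ex Pr f + Ex Pr g.
Proof. by move=> hf hg; apply: RintegralD => //; exact: good_int. Qed.

Lemma Ex_opp f : good f -> Ex Pr (fun w => - f w) = - Ex Pr f.
Proof.
move=> hf; rewrite /Ex -[RHS]mulN1r -RintegralZl //; last exact: good_int.
by apply: eq_Rintegral => w _; rewrite mulN1r.
Qed.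

Lemma Ex_sub f g : good f -> good g -> Ex Pr (fun w => f w - g w) = Ex Pr f - Ex Pr g.
Proof. by move=> hf hg; apply: RintegralB => //; exact: good_int. Qed.

Lemma Ex_scal c f : good f -> Ex Pr (fun w => c * f w) = c * Ex Pr f.
Proof. by move=> hf; apply: RintegralZl => //; exact: good_int. Qed.

Lemma Ex_scalr c f : good f -> Ex Pr (fun w => f w * c) = Ex Pr f * c.
Proof. by move=> hf; apply: RintegralZr => //; exact: good_int. Qed.

Lemma Ex_cst c : Ex Pr (fun _ => c) = c.
Proof.
rewrite /Ex Rintegral_cst //.
transitivity (c * fine (1%E : \bar R)); last by rewrite /= mulr1.
by congr (_ * fine _); exact: probability_setT.
Qed.

Lemma Ex_sumr (I : Type) (r : seq I) (F : I -> Om -> R) :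
  (forall i, good (F i)) -> Ex Pr (fun w => \sum_(i <- r) F i w) = \sum_(i <- r) Ex Pr (F i).
Proof.
move=> hF; elim: r => [|i r IH] /=.
  under [X in Ex _ X]funext do rewrite big_nil; rewrite big_nil; exact: Ex_cst.
under [X in Ex _ X]funext do rewrite big_cons; rewrite big_cons Ex_add ?IH //.
exact: good_sumr.
Qed.

Lemma Ex_sum (I : finType) (F : I -> Om -> R) :
  (forall i, good (F i)) -> Ex Pr (fun w => \sum_i F i w) = \sum_i Ex Pr (F i).
Proof. by move=> hF; apply: Ex_sumr. Qed.

Lemma Ex_ext f g : (forall w, f w = g w) -> Ex Pr f = Ex Pr g.
Proof. by move=> h; apply: eq_Rintegral => w _; exact: h. Qed.

Lemma Ex_indic (D : set Om) : measurable D -> Ex Pr (\1_D) = fine (Pr D).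
Proof.
move=> mD; rewrite /Ex /Rintegral integral_indic // setIT //.
Qed.

Lemma Ex_le f g : good f -> good g -> (forall w, f w <= g w) -> Ex Pr f <= Ex Pr g.
Proof. by move=> hf hg h; apply: le_Rintegral => //; exact: good_int. Qed.

Lemma Ex_norm_le f M : good f -> (forall w, `|f w| <= M) -> `|Ex Pr f| <= M.
Proof.
move=> hf hM; apply: le_trans (le_normr_Rintegral _ _) _ => //.
  exact: good_int.
rewrite -[M]Ex_cst; apply: le_Rintegral => //.
- have [mf [N hN]] := hf.
  apply: good_int; split; first exact: measurableT_comp.
  by exists N => w; rewrite normr_id; exact: hN.
- by apply: good_int; exact: good_cst.
Qed.

Lemma Var_eq f : good f -> Var Pr f = Ex Pr (fun w => f w ^+ 2) - (Ex Pr f) ^+ 2.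
Proof.
move=> hf; rewrite /Var.
have h2 : good (fun w => f w ^+ 2) by rewrite /GRing.exp /=; exact: good_mul.
rewrite (@Ex_ext _ (fun w => f w ^+ 2 + (- (2 * Ex Pr f) * f w + (Ex Pr f) ^+ 2))); last first.
  by move=> w; rewrite sqrrB; ring.
rewrite Ex_add //; last by apply: good_add; [apply: good_mul; [exact: good_cst|]|exact: good_cst].
rewrite Ex_add //; [|by apply: good_mul; [exact: good_cst|] | exact: good_cst].
rewrite Ex_scal // Ex_cst; ring.
Qed.

End ExLemmas.
Section MDPLemmas.
Variables (R : realType) (S A : finType) (r : S -> A -> R) (gamma : R)
  (pi : policy R S A) (hpi : is_policy pi).

Definition substoch (q : trans R S A) :=
  (forall s a s', 0 <= q s a s') /\ (forall s a, \sum_s' q s a s' <= 1).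

Lemma trans_substoch q : is_trans q -> substoch q.
Proof. by case=> h1 h2; split => // s a; rewrite h2. Qed.

Lemma step_bound q f M s : substoch q -> (forall x, `|f x| <= M) ->
  `|step pi q f s| <= M.
Proof.
case: hpi => hp0 hp1 [hq0 hq1] hM.
have M0 : 0 <= M by apply: le_trans (hM s).
rewrite /step; apply: le_trans (ler_norm_sum _ _ _) _.
apply: (@le_trans _ _ (\sum_a pi s a * M)).
  apply: ler_sum => a _; rewrite normrM ger0_norm //; apply: ler_wpM2l => //.
  apply: le_trans (ler_norm_sum _ _ _) _.
  apply: (@le_trans _ _ (\sum_s' q s a s' * M)).
    apply: ler_sum => s' _; rewrite normrM ger0_norm //; exact: ler_wpM2l.
  by rewrite -mulr_suml; apply: ler_piMl => //.
by rewrite -mulr_suml hp1 mul1r.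
Qed.

Lemma iter_bound q f M h s : substoch q -> (forall x, `|f x| <= M) ->
  `|iter h (step pi q) f s| <= M.
Proof.
move=> hq hM; elim: h s => [|h IH] s /=; first exact: hM.
exact: step_bound.
Qed.

Lemma step_lin q (I : Type) (rr : seq I) (c : I -> R) (F : I -> S -> R) s :
  step pi q (fun x => \sum_(i <- rr) c i * F i x) s
  = \sum_(i <- rr) c i * step pi q (F i) s.
Proof.
rewrite /step.
transitivity (\sum_a \sum_s' \sum_(i <- rr) c i * (pi s a * (q s a s' * F i s'))).
  apply: eq_bigr => a _; rewrite mulr_sumr; apply: eq_bigr => s' _.
  rewrite mulr_sumr mulr_sumr; apply: eq_bigr => i _; ring.
under eq_bigr => a _ do rewrite exchange_big /=.
rewrite exchange_big /=; apply: eq_bigr => i _.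
rewrite mulr_sumr; apply: eq_bigr => a _.
rewrite mulr_sumr mulr_sumr; apply: eq_bigr => s' _; ring.
Qed.

Lemma iter_lip q q' f M dl h x : substoch q -> substoch q' ->
  (forall s a s', `|q s a s' - q' s a s'| <= dl) ->
  (forall y, `|f y| <= M) ->
  `|iter h (step pi q) f x - iter h (step pi q') f x| <= h%:R * (#|S|%:R * dl * M).
Proof.
case: (hpi) => hp0 hp1 hq hq' hd hM.
have M0 : 0 <= M by apply: le_trans (hM x).
elim: h x => [|h IH] x /=; first by rewrite subrr normr0 mul0r.
set g := iter h (step pi q) f; set g' := iter h (step pi q') f.
have -> : step pi q g x - step pi q' g' x =
  step pi q (fun y => g y - g' y) x
  + \sum_a pi x a * \sum_s' (q x a s' - q' x a s') * g' s'.
  rewrite /step -sumrB -big_split /=; apply: eq_bigr => a _.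
  rewrite -mulrBr -mulrDr; congr (_ * _).
  rewrite -sumrB -big_split /=; apply: eq_bigr => s' _; ring.
apply: le_trans (ler_normD _ _) _.
rewrite mulrSr mulrDl mul1r; apply: lerD.
  by apply: step_bound => // y; exact: IH.
apply: le_trans (ler_norm_sum _ _ _) _.
apply: (@le_trans _ _ (\sum_a pi x a * (#|S|%:R * dl * M))).
  apply: ler_sum => a _; rewrite normrM ger0_norm //; apply: ler_wpM2l => //.
  apply: le_trans (ler_norm_sum _ _ _) _.
  apply: (@le_trans _ _ (\sum_(s' : S) dl * M)).
    apply: ler_sum => s' _; rewrite normrM; apply: ler_pM => //.
    exact: iter_bound.
  by rewrite sumr_const -mulrA mulr_natl.
by rewrite -mulr_suml hp1 mul1r.
Qed.

End MDPLemmas.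
Section Acyclic.
Variables (R : realType) (S A : finType) (r : S -> A -> R) (gamma : R)
  (pi : policy R S A) (hpi : is_policy pi) (q : trans R S A) (hq : is_trans q)
  (rho : S -> nat) (T : pred S)
  (hT : forall s, T s -> forall a, q s a s = 1 /\ r s a = 0)
  (hrho : forall s a s', ~~ T s -> 0 < q s a s' -> (rho s' < rho s)%N).

Lemma term_row s a s' : T s -> q s a s' = (s' == s)%:R.
Proof.
move=> Ts; have [h1 _] := hT Ts a.
case: eqP => [-> //|ne].
case: hq => h0 hs.
have := hs s a; rewrite (bigD1 s) //= h1 -[X in _ = X]addr0 => /addrI H.
apply: (psumr_eq0P _ H) => //; exact/eqP.
Qed.

Lemma step_term f s : T s -> step pi q f s = f s.
Proof.
move=> Ts.
have E : forall a, \sum_s' q s a s' * f s' = f s.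
  move=> a; rewrite (bigD1 s) //= term_row // eqxx mul1r big1 ?addr0 // => s' hs'.
  by rewrite term_row // (negbTE hs') mul0r.
rewrite /step; under eq_bigr => a _ do rewrite E.
by rewrite -mulr_suml (proj2 hpi s) mul1r.
Qed.

Lemma iter_vanish h : forall s, T s || (rho s < h)%N ->
  iter h (step pi q) (rpi r pi) s = 0.
Proof.
case: hq => h0 _.
elim: h => [|h IH] s /=.
  rewrite ltn0 orbF => Ts; rewrite /rpi big1 // => a _.
  by have [_ ->] := hT Ts a; rewrite mulr0.
case Ts: (T s) => /= H.
  by rewrite step_term // IH // Ts.
rewrite /step big1 // => a _; rewrite big1 ?mulr0 // => s' _.
have := h0 s a s'; rewrite le_eqVlt => /orP[/eqP <-|pos]; first by rewrite mul0r.
rewrite IH ?mulr0 //; apply/orP; right.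
exact: leq_trans (hrho (negbT Ts) pos) H.
Qed.

Lemma value_fin K : (forall s, rho s < K)%N -> forall s,
  value r gamma pi q s = \sum_(0 <= h < K) gamma ^+ h * iter h (step pi q) (rpi r pi) s.
Proof.
move=> hK s; rewrite /value; apply: norm_lim_near_cst; exists K => // n /= hn.
rewrite (@big_cat_nat _ _ _ K) //= [X in _ + X = _]big1_seq ?addr0 //.
move=> h /andP[_]; rewrite mem_index_iota => /andP[hKh _].
rewrite iter_vanish ?mulr0 //.
by apply/orP; right; exact: leq_trans (hK s) hKh.
Qed.

Lemma bellman K : (forall s, rho s < K)%N -> forall s,
  value r gamma pi q s = rpi r pi s + gamma * step pi q (value r gamma pi q) s.
Proof.
move=> hK s.
have hK1 : forall x, (rho x < K.+1)%N by move=> x; exact: leqW (hK x).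
rewrite (value_fin hK1) big_nat_recl // expr0 mul1r /=.
have -> : value r gamma pi q = fun x => \sum_(0 <= h < K) gamma ^+ h * iter h (step pi q) (rpi r pi) x.
  by apply: funext => x; exact: value_fin.
rewrite step_lin; congr (_ + _); rewrite mulr_sumr; apply: eq_bigr => h _.
by rewrite exprS /= mulrA.
Qed.

Lemma iter_agree (q' : trans R S A) s0 : ~~ T s0 ->
  (forall x a y, x != s0 -> q' x a y = q x a y) ->
  forall f h y, T y || (rho y < rho s0)%N ->
  iter h (step pi q') f y = iter h (step pi q) f y.
Proof.
move=> Ts0 hqq f h; case: hq => h0 _.
elim: h => [//|h IH] y /= Hy.
have ys0 : y != s0.
  apply/eqP => E; move: Hy; rewrite E (negbTE Ts0) /= ltnn //.
rewrite /step; apply: eq_bigr => a _; congr (_ * _); apply: eq_bigr => s' _.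
rewrite hqq //.
have := h0 y a s'; rewrite le_eqVlt => /orP[/eqP <-|pos]; first by rewrite !mul0r.
rewrite IH //.
case Ty: (T y).
  move: pos; rewrite term_row //; case: eqP => [-> _|]; first by rewrite Ty.
  by rewrite ltxx.
apply/orP; right; move: Hy; rewrite Ty /= => Hy.
exact: ltn_trans (hrho (negbT Ty) pos) Hy.
Qed.

End Acyclic.
Section Disc.
Variables (R : realType) (N : nat) (hN : (0 < N)%N).

Definition Itv (k : nat) : set R :=
  [set` Interval (BLeft (k%:R / N%:R)) (BLeft (k.+1%:R / N%:R))].
Definition idx (v : R) : 'I_N.+1 := inord (Num.trunc (N%:R * v)).
Definition disc (v : R) : R := (idx v)%:R / N%:R.

Lemma N0 : 0 < (N%:R : R). Proof. by rewrite ltr0n. Qed.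

Lemma idx_val v : 0 <= v <= 1 -> (idx v : nat) = Num.trunc (N%:R * v).
Proof.
move=> /andP[v0 v1]; rewrite /idx inordK // ltnS truncn_le_nat.
apply: (@le_lt_trans _ _ N%:R); last by rewrite ltr_nat.
by rewrite -[X in _ <= X]mulr1 ler_wpM2l // ler0n.
Qed.

Lemma Itv_idx v (k : 'I_N.+1) : 0 <= v <= 1 -> Itv k v <-> idx v = k.
Proof.
move=> hv; have /andP[v0 v1] := hv.
rewrite /Itv /= in_itv /= ler_pdivrMr ?N0 // ltr_pdivlMr ?N0 //.
split.
  move=> H; apply: val_inj => /=; rewrite idx_val //; apply/eqP.
  by rewrite truncn_eq ?mulr_ge0 ?ler0n // mulrC.
move=> <-; rewrite idx_val //.
have := truncn_itv (mulr_ge0 (ler0n R N) v0).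
by rewrite ![v * _]mulrC.
Qed.

Lemma Itv_meas k : measurable (Itv k).
Proof. exact: measurable_itv. Qed.

Lemma disc_bounds v : 0 <= v <= 1 ->
  [/\ 0 <= disc v, disc v <= v & v - disc v <= N%:R^-1].
Proof.
move=> hv; have /andP[v0 v1] := hv.
have := truncn_itv (mulr_ge0 (ler0n R N) v0); rewrite /disc idx_val //.
set t := Num.trunc _ => /andP[h1 h2].
have Np := N0.
split.
- by apply: divr_ge0; rewrite ler0n.
- by rewrite ler_pdivrMr // mulrC.
- have : v < (t.+1)%:R / N%:R by rewrite ltr_pdivlMr // mulrC.
  rewrite -natr1 mulrDl mul1r.
  set a := t%:R / N%:R; set b := N%:R^-1; move=> h; lra.
Qed.

End Disc.
Arguments Itv {R} N k.
Arguments idx {R} N v.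
Arguments disc {R} N v.
Arguments Itv_idx {R N} hN v k.
Arguments disc_bounds {R N} hN v.
Arguments idx_val {R N} v.
Arguments N0 {R N} hN.
Section IndepCells.
Variables (R : realType) (d : measure_display) (Om : measurableType d)
  (Pr : probability Om R) (S A : finType) (P : Om -> trans R S A)
  (hmP : forall s a s', measurable_fun setT (fun w => P w s a s'))
  (hP : forall w, is_trans (P w)) (hind : indep_rows Pr P) (s0 : S) (N : nat) (hN : (0 < N)%N).

Local Notation rowT := {ffun A * S -> 'I_N.+1}.
Local Notation allT := {ffun S -> {ffun A * S -> 'I_N.+1}}.

Lemma P01 w x a y : 0 <= P w x a y <= 1.
Proof.
case: (hP w) => h0 h1; rewrite h0 /= -(h1 x a) (bigD1 y) //= lerDl.
by apply: sumr_ge0 => i _.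
Qed.

Definition Cyl (B : S -> A -> S -> set R) : set Om :=
  \bigcap_(x in [set: S]) [set w | forall a s', B x a s' (P w x a s')].

Lemma Cyl_meas B : (forall x a s', measurable (B x a s')) -> measurable (Cyl B).
Proof.
move=> mB; apply: fin_bigcap_measurable; first exact: finite_finset.
move=> x _.
have -> : [set w | forall a s', B x a s' (P w x a s')] =
  \bigcap_(a in [set: A]) \bigcap_(s' in [set: S])
     ([set: Om] `&` (fun w => P w x a s') @^-1` (B x a s')).
  apply/seteqP; split => w h.
    by move=> a _ s' _; split => //; exact: h.
  by move=> a s'; have [] := h a I s' I.
apply: fin_bigcap_measurable; first exact: finite_finset.
move=> a _; apply: fin_bigcap_measurable; first exact: finite_finset.
by move=> s' _; apply: hmP.
Qed.

Lemma inCyl B w : Cyl B w <-> forall x a y, B x a y (P w x a y).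
Proof. by split => [h x a y|h x _ a y]; [exact: h | exact: h]. Qed.

Definition rowcell w x : {ffun A * S -> 'I_N.+1} :=
  [ffun p => idx N (P w x p.1 p.2)].
Definition Bs (al : {ffun A * S -> 'I_N.+1}) (x : S) (a : A) (y : S) : set R :=
  if x == s0 then Itv N (al (a, y)) else setT.
Definition Brest (be : {ffun S -> {ffun A * S -> 'I_N.+1}}) (x : S) (a : A) (y : S) : set R :=
  if x == s0 then setT else Itv N (be x (a, y)).
Definition Bj (al : {ffun A * S -> 'I_N.+1}) (be : {ffun S -> {ffun A * S -> 'I_N.+1}}) (x : S) (a : A) (y : S) : set R :=
  if x == s0 then Itv N (al (a, y)) else Itv N (be x (a, y)).

Lemma Bs_meas al x a y : measurable (Bs al x a y).
Proof. by rewrite /Bs; case: eqP => _ //; exact: Itv_meas. Qed.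
Lemma Brest_meas be x a y : measurable (Brest be x a y).
Proof. by rewrite /Brest; case: eqP => _ //; exact: Itv_meas. Qed.
Lemma Bj_meas al be x a y : measurable (Bj al be x a y).
Proof. by rewrite /Bj; case: eqP => _ //; exact: Itv_meas. Qed.

Lemma Cyl_s al w : Cyl (Bs al) w <-> rowcell w s0 = al.
Proof.
rewrite inCyl; split.
  move=> H; apply/ffunP => -[a y]; rewrite ffunE /=.
  by have := H s0 a y; rewrite /Bs eqxx => /(Itv_idx hN); apply; exact: P01.
move=> H x a y; rewrite /Bs; case: eqP => [->|_] //.
by apply/(Itv_idx hN); [exact: P01|]; rewrite -H ffunE.
Qed.

Lemma Cyl_rest be w :
  Cyl (Brest be) w <-> forall x, x != s0 -> rowcell w x = be x.
Proof.
rewrite inCyl; split.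
  move=> H x xs; apply/ffunP => -[a y]; rewrite ffunE /=.
  by have := H x a y; rewrite /Brest (negbTE xs) => /(Itv_idx hN); apply; exact: P01.
move=> H x a y; rewrite /Brest; case: eqP => [//|/eqP xs].
by apply/(Itv_idx hN); [exact: P01|]; rewrite -(H x xs) ffunE.
Qed.

Lemma Cyl_j al be : Cyl (Bj al be) = Cyl (Bs al) `&` Cyl (Brest be).
Proof.
apply/seteqP; split => w.
  move/inCyl => H; split; apply/inCyl => x a y; have := H x a y;
  by rewrite /Bj /Bs /Brest; case: eqP.
move=> [/inCyl H1 /inCyl H2]; apply/inCyl => x a y.
by have := H1 x a y; have := H2 x a y; rewrite /Bj /Bs /Brest; case: eqP.
Qed.

Lemma Cyl_prod B : (forall x a s', measurable (B x a s')) ->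
  fine (Pr (Cyl B)) = \prod_x fine (Pr [set w | forall a s', B x a s' (P w x a s')]).
Proof. by move=> mB; have := hind mB; rewrite /Cyl /= => ->. Qed.

Lemma setT_row x : [set w | forall a s', @setT R (P w x a s')] = setT.
Proof. by apply/seteqP; split => // w _ a s'. Qed.

Lemma Pr_split al be : fine (Pr (Cyl (Bj al be))) =
  fine (Pr (Cyl (Bs al))) * fine (Pr (Cyl (Brest be))).
Proof.
rewrite !Cyl_prod //; [|exact: Brest_meas|exact: Bs_meas|exact: Bj_meas].
rewrite -big_split /=; apply: eq_bigr => x _.
rewrite /Bj /Bs /Brest; case: (x == s0); rewrite setT_row probability_setT /=.
  by rewrite mulr1.
by rewrite mul1r.
Qed.

Definition c0 : {ffun A * S -> 'I_N.+1} := [ffun _ => ord0].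
Definition crest w : {ffun S -> {ffun A * S -> 'I_N.+1}} :=
  [ffun x => if x == s0 then c0 else rowcell w x].

Lemma good_indic (D : set Om) : measurable D -> good (\1_D : Om -> R).
Proof.
move=> mD; split; first exact: measurable_indic.
by exists 1 => w; rewrite indicE; case: (w \in D); rewrite ?normr1 ?normr0.
Qed.

Lemma indic_s al w : \1_(Cyl (Bs al)) w = (rowcell w s0 == al)%:R :> R.
Proof.
rewrite indicE; case: eqP => [H|H].
  by rewrite mem_set //; apply/Cyl_s.
by rewrite memNset // => /Cyl_s.
Qed.

Lemma e1 (f : {ffun A * S -> 'I_N.+1} -> R) w :
  f (rowcell w s0) = \sum_(al : rowT) f al * \1_(Cyl (Bs al)) w.
Proof.
under eq_bigr do rewrite indic_s.
rewrite (bigD1 (rowcell w s0)) //= eqxx mulr1 big1 ?addr0 // => al.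
by rewrite eq_sym => /negbTE ->; rewrite mulr0.
Qed.

Lemma e2 (g : {ffun S -> {ffun A * S -> 'I_N.+1}} -> R) w :
  g (crest w) = \sum_(be : allT) (if be s0 == c0 then g be else 0) * \1_(Cyl (Brest be)) w.
Proof.
rewrite (bigD1 (crest w)) //= ffunE !eqxx.
rewrite indicE mem_set ?mulr1; last first.
  by apply/Cyl_rest => x xs; rewrite ffunE (negbTE xs).
rewrite big1 ?addr0 // => be hbe.
case: eqP => [hb|]; last by rewrite mul0r.
rewrite indicE memNset ?mulr0 // => /Cyl_rest H.
move/eqP: hbe; apply; apply/ffunP => x; rewrite ffunE.
by case: eqP => [->|/eqP xs]; [rewrite hb | rewrite H].
Qed.

Lemma indep_cells (f : {ffun A * S -> 'I_N.+1} -> R)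
  (g : {ffun S -> {ffun A * S -> 'I_N.+1}} -> R) :
  Ex Pr (fun w => f (rowcell w s0) * g (crest w)) =
  Ex Pr (fun w => f (rowcell w s0)) * Ex Pr (fun w => g (crest w)).
Proof.
set g' := fun be : {ffun S -> {ffun A * S -> 'I_N.+1}} =>
  if be s0 == c0 then g be else 0.
have mS al : measurable (Cyl (Bs al)) by apply: Cyl_meas => *; exact: Bs_meas.
have mR be : measurable (Cyl (Brest be)) by apply: Cyl_meas => *; exact: Brest_meas.
have mJ al be : measurable (Cyl (Bj al be)) by apply: Cyl_meas => *; exact: Bj_meas.
have E1 : Ex Pr (fun w => f (rowcell w s0)) =
    \sum_(al : rowT) f al * fine (Pr (Cyl (Bs al))).
  under Ex_ext => w do rewrite e1.
  rewrite Ex_sum; last by move=> al; apply: good_mul; [exact: good_cst|exact: good_indic].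
  by apply: eq_bigr => al _; rewrite Ex_scal ?Ex_indic //; exact: good_indic.
have E2 : Ex Pr (fun w => g (crest w)) =
    \sum_(be : allT) g' be * fine (Pr (Cyl (Brest be))).
  under Ex_ext => w do rewrite e2.
  rewrite Ex_sum; last by move=> be; apply: good_mul; [exact: good_cst|exact: good_indic].
  by apply: eq_bigr => be _; rewrite Ex_scal ?Ex_indic //; exact: good_indic.
have e3 : forall w, f (rowcell w s0) * g (crest w) =
    \sum_(al : rowT) \sum_(be : allT) (f al * g' be) * \1_(Cyl (Bj al be)) w.
  move=> w; rewrite e1 e2 big_distrl /=; apply: eq_bigr => al _.
  rewrite big_distrr /=; apply: eq_bigr => be _.
  by rewrite Cyl_j indicI /= /g'; ring.
have E3 : Ex Pr (fun w => f (rowcell w s0) * g (crest w)) =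
    \sum_(al : rowT) \sum_(be : allT) (f al * g' be) * fine (Pr (Cyl (Bj al be))).
  under Ex_ext => w do rewrite e3.
  rewrite Ex_sum; last first.
    move=> al; apply: good_sum => be; apply: good_mul; [exact: good_cst|exact: good_indic].
  apply: eq_bigr => al _; rewrite Ex_sum; last first.
    by move=> be; apply: good_mul; [exact: good_cst|exact: good_indic].
  by apply: eq_bigr => be _; rewrite Ex_scal ?Ex_indic //; exact: good_indic.
rewrite E1 E2 E3 big_distrl; apply: eq_bigr => al _ /=.
rewrite big_distrr; apply: eq_bigr => be _ /=; rewrite Pr_split; ring.
Qed.

End IndepCells.
Section Approx.
Variables (R : realType) (d : measure_display) (Om : measurableType d)
  (Pr : probability Om R) (S A : finType) (P : Om -> trans R S A)
  (hmP : forall s a s', measurable_fun setT (fun w => P w s a s'))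
  (hP : forall w, is_trans (P w)) (hind : indep_rows Pr P) (s0 : S).

Lemma eq_good (f g : Om -> R) : (forall w, f w = g w) -> good g -> good f.
Proof. by move=> h; rewrite (_ : f = g) //; apply: funext. Qed.

Lemma good_rowf N (hN : (0 < N)%N) (f : {ffun A * S -> 'I_N.+1} -> R) :
  good (fun w => f (rowcell P N w s0)).
Proof.
under [X in good X]funext => w do rewrite (e1 hP s0 hN f w).
apply: good_sum => al.
apply: good_mul; first exact: good_cst.
by apply: good_indic; apply: Cyl_meas => // *; exact: Bs_meas.
Qed.

Lemma good_crestg N (hN : (0 < N)%N) (g : {ffun S -> {ffun A * S -> 'I_N.+1}} -> R) :
  good (fun w => g (crest P s0 N w)).
Proof.
under [X in good X]funext => w do rewrite (e2 hP s0 hN g w).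
apply: good_sum => be.
apply: good_mul; first exact: good_cst.
by apply: good_indic; apply: Cyl_meas => // *; exact: Brest_meas.
Qed.

Lemma small0 (D c : R) : (forall n, (0 < n)%N -> `|D| <= c / n%:R) -> D = 0.
Proof.
move=> H; apply/eqP/negPn/negP => hD.
have Dp : 0 < `|D| by rewrite normr_gt0.
set n := (Num.trunc (c / `|D|)).+1.
have h1 := H n erefl.
have h2 : c / `|D| < n%:R by exact: truncnS_gt.
have np : 0 < (n%:R : R) by rewrite ltr0n.
move: h1; rewrite ler_pdivlMr // => h1.
move: h2; rewrite ltr_pdivrMr // => h2.
have : `|D| * n%:R < `|D| * n%:R by apply: le_lt_trans h1 _; rewrite mulrC.
by rewrite ltxx.
Qed.

Lemma prod_approx (x y x' y' e MX MY : R) : `|x - x'| <= e -> `|y - y'| <= e ->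
  `|x| <= MX -> `|y| <= MY -> `|x * y - x' * y'| <= e * MY + (MX + e) * e.
Proof.
move=> h1 h2 h3 h4.
have -> : x * y - x' * y' = (x - x') * y + x' * (y - y') by ring.
apply: le_trans (ler_normD _ _) _; rewrite !normrM; apply: lerD.
  by apply: ler_pM.
apply: ler_pM => //.
have -> : x' = x - (x - x') by ring.
by apply: le_trans (ler_normB _ _) _; apply: lerD.
Qed.

Lemma indep_approx (X Y : Om -> R) (C : R) : good X -> good Y -> 0 <= C ->
  (forall N, (0 < N)%N -> exists f : {ffun A * S -> 'I_N.+1} -> R,
     exists g : {ffun S -> {ffun A * S -> 'I_N.+1}} -> R, forall w,
     `|X w - f (rowcell P N w s0)| <= C / N%:R /\
     `|Y w - g (crest P s0 N w)| <= C / N%:R) ->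
  Ex Pr (fun w => X w * Y w) = Ex Pr X * Ex Pr Y.
Proof.
move=> gX gY C0 hA.
have [mX [MX0 hMX0]] := gX; have [mY [MY0 hMY0]] := gY.
set MX := `|MX0|; set MY := `|MY0|.
have hMX w : `|X w| <= MX by apply: le_trans (hMX0 w) (ler_norm _).
have hMY w : `|Y w| <= MY by apply: le_trans (hMY0 w) (ler_norm _).
have MXp : 0 <= MX by rewrite /MX normr_ge0.
have MYp : 0 <= MY by rewrite /MY normr_ge0.
apply/eqP; rewrite -subr_eq0; apply/eqP.
apply: (@small0 _ (2 * (MY + MX + C) * C)) => N hN.
have [f [g H]] := hA N hN.
set e := C / N%:R.
have Np : 0 < (N%:R : R) by rewrite ltr0n.
have e0 : 0 <= e by apply: divr_ge0 => //; exact: ltW.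
have eC : e <= C.
  rewrite /e ler_pdivrMr // -[X in X <= _]mulr1 ler_wpM2l // ler1n //.
set Xn := fun w => f (rowcell P N w s0).
set Yn := fun w => g (crest P s0 N w).
have gXn : good Xn by exact: good_rowf.
have gYn : good Yn by exact: good_crestg.
have key : Ex Pr (fun w => Xn w * Yn w) = Ex Pr Xn * Ex Pr Yn.
  exact: (indep_cells hmP hP hind s0 hN f g).
set B := e * MY + (MX + e) * e.
have b1 : `|Ex Pr (fun w => X w * Y w) - Ex Pr (fun w => Xn w * Yn w)| <= B.
  rewrite -Ex_sub; [|exact: good_mul|exact: good_mul].
  apply: Ex_norm_le => [|w].
    by apply: good_add; [exact: good_mul|apply: good_opp; exact: good_mul].
  by apply: prod_approx; [exact: (proj1 (H w))|exact: (proj2 (H w))|exact: hMX|exact: hMY].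
have b2 : `|Ex Pr X * Ex Pr Y - Ex Pr Xn * Ex Pr Yn| <= B.
  apply: prod_approx.
  - rewrite -Ex_sub //; apply: Ex_norm_le => [|w]; last exact: (proj1 (H w)).
    by apply: good_add => //; exact: good_opp.
  - rewrite -Ex_sub //; apply: Ex_norm_le => [|w]; last exact: (proj2 (H w)).
    by apply: good_add => //; exact: good_opp.
  - exact: Ex_norm_le.
  - exact: Ex_norm_le.
have -> : Ex Pr (fun w => X w * Y w) - Ex Pr X * Ex Pr Y =
  (Ex Pr (fun w => X w * Y w) - Ex Pr (fun w => Xn w * Yn w))
  - (Ex Pr X * Ex Pr Y - Ex Pr Xn * Ex Pr Yn) by rewrite key; ring.
apply: le_trans (ler_normB _ _) _.
have -> : 2 * (MY + MX + C) * C / N%:R = 2 * (MY + MX + C) * e by rewrite /e mulrA.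
have hB : B <= (MY + MX + C) * e by rewrite /B; nra.
by apply: le_trans (lerD b1 b2) _; nra.
Qed.

End Approx.
Unset Implicit Arguments.
Section Main.
Variables (R : realType) (d : measure_display) (Om : measurableType d)
  (Pr : probability Om R) (S A : finType) (r : S -> A -> R) (gamma : R)
  (pi : policy R S A) (hpi : is_policy pi) (P : Om -> trans R S A)
  (hmP : forall s a s', measurable_fun setT (fun w => P w s a s'))
  (hP : forall w, is_trans (P w)) (hind : indep_rows Pr P)
  (rho : S -> nat) (T : pred S)
  (hT : forall s, T s -> forall w a, P w s a s = 1 /\ r s a = 0)
  (hrho : forall w s a s', ~~ T s -> 0 < P w s a s' -> (rho s' < rho s)%N)
  (K : nat) (hK : forall s, (rho s < K)%N).

Let hTw w : forall s, T s -> forall a, P w s a s = 1 /\ r s a = 0.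
Proof. by move=> s Ts a; exact: hT. Qed.


Lemma good_P s a s' : good (fun w => P w s a s').
Proof.
split; first exact: hmP.
by exists 1 => w; have /andP[h0 h1] := P01 hP w s a s'; rewrite ger0_norm.
Qed.

Lemma good_iter h (f : S -> R) x : good (fun w => iter h (step pi (P w)) f x).
Proof.
elim: h x => [|h IH] x /=; first exact: good_cst.
rewrite /step; apply: good_sum => a; apply: good_mul; first exact: good_cst.
apply: good_sum => s'; apply: good_mul; [exact: good_P|exact: IH].
Qed.

Lemma V_fin w x : value r gamma pi (P w) x =
  \sum_(0 <= h < K) gamma ^+ h * iter h (step pi (P w)) (rpi r pi) x.
Proof. exact: (value_fin gamma hpi (hP w) (hTw w) (hrho w) hK). Qed.

Lemma good_V x : good (fun w => value r gamma pi (P w) x).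
Proof.
under [X in good X]funext => w do rewrite V_fin.
apply: good_sumr => h; apply: good_mul; [exact: good_cst|exact: good_iter].
Qed.

Lemma V_bellman w s : value r gamma pi (P w) s = rpi r pi s + gamma * step pi (P w) (value r gamma pi (P w)) s.
Proof. exact: (bellman gamma hpi (hP w) (hTw w) (hrho w) hK). Qed.

Lemma F3_const s a s' c : (forall w, P w s a s' = c) ->
  (forall Y : Om -> R, good Y ->
   Ex Pr (fun w => P w s a s' * Y w) = Ex Pr (fun w => P w s a s') * Ex Pr Y).
Proof.
move=> hc Y gY; under Ex_ext => w do rewrite hc.
by rewrite Ex_scal // (Ex_ext Pr (fun w => hc w)) Ex_cst.
Qed.

Definition zero (s : S) (q : trans R S A) : trans R S A :=
  fun x a y => if x == s then 0 else q x a y.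

Lemma substoch_zero s q : substoch q -> substoch (zero s q).
Proof.
case=> h0 h1; split => [x a y|x a]; rewrite /zero; case: eqP => // _.
by rewrite big1.
Qed.

Definition Mr := \sum_x `|rpi r pi x|.
Lemma Mr_bound x : `|rpi r pi x| <= Mr.
Proof. by rewrite /Mr (bigD1 x) //= lerDl; apply: sumr_ge0. Qed.

Definition Fz s s' (q : trans R S A) :=
  \sum_(0 <= h < K) gamma ^+ h * iter h (step pi (zero s q)) (rpi r pi) s'.

Lemma Fz_bound s s' q : substoch q -> `|Fz s s' q| <= \sum_(0 <= h < K) `|gamma| ^+ h * Mr.
Proof.
move=> hq; rewrite /Fz; apply: le_trans (ler_norm_sum _ _ _) _.
apply: ler_sum => h _; rewrite normrM normrX; apply: ler_wpM2l.
  exact: exprn_ge0.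
apply: iter_bound => //; [exact: substoch_zero|exact: Mr_bound].
Qed.

Lemma Fz_lip s s' q q' N : (0 < N)%N -> substoch q -> substoch q' ->
  (forall x a y, `|q x a y - q' x a y| <= N%:R^-1) ->
  `|Fz s s' q - Fz s s' q'| <=
   (\sum_(0 <= h < K) `|gamma| ^+ h * (h%:R * (#|S|%:R * Mr))) / N%:R.
Proof.
move=> hN hq hq' hd; rewrite /Fz -sumrB.
apply: le_trans (ler_norm_sum _ _ _) _; rewrite mulr_suml.
apply: ler_sum => h _; rewrite -mulrBr normrM normrX.
have -> : `|gamma| ^+ h * (h%:R * (#|S|%:R * Mr)) / N%:R =
  `|gamma| ^+ h * (h%:R * (#|S|%:R * N%:R^-1 * Mr)) by ring.
apply: ler_wpM2l; first exact: exprn_ge0.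
apply: iter_lip => //; [exact: substoch_zero|exact: substoch_zero| |exact: Mr_bound].
move=> x a y; rewrite /zero; case: eqP => _; last exact: hd.
by rewrite subrr normr0 invr_ge0 ler0n.
Qed.

Lemma V_Fz w s s' : ~~ T s -> (rho s' < rho s)%N -> value r gamma pi (P w) s' = Fz s s' (P w).
Proof.
move=> Ts hs; rewrite V_fin /Fz; apply: eq_bigr => h _; congr (_ * _).
apply/esym; apply: (iter_agree pi (hP w) (hTw w) (hrho w) Ts).
  by move=> x a y xs; rewrite /zero (negbTE xs).
by rewrite hs orbT.
Qed.

Definition discP N w : trans R S A := fun x a y => disc N (P w x a y).

Lemma substoch_disc N w : (0 < N)%N -> substoch (discP N w).
Proof.
move=> hN; split => [x a y|x a].
  by have [] := disc_bounds hN _ (P01 hP w x a y).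
apply: (@le_trans _ _ (\sum_y P w x a y)); last by rewrite (proj2 (hP w)).
apply: ler_sum => y _; by have [] := disc_bounds hN _ (P01 hP w x a y).
Qed.

Lemma core_approx s s' : ~~ T s -> (rho s' < rho s)%N ->
  exists Cy Mv, [/\ 0 <= Cy, (forall w, `|value r gamma pi (P w) s'| <= Mv) &
  forall N, (0 < N)%N -> exists g : {ffun S -> {ffun A * S -> 'I_N.+1}} -> R,
    forall w, `|value r gamma pi (P w) s' - g (crest P s N w)| <= Cy / N%:R /\
              `|g (crest P s N w)| <= Mv].
Proof.
move=> Ts hs.
exists (\sum_(0 <= h < K) `|gamma| ^+ h * (h%:R * (#|S|%:R * Mr))).
exists (\sum_(0 <= h < K) `|gamma| ^+ h * Mr).
split.
- apply: sumr_ge0 => h _; apply: mulr_ge0; first exact: exprn_ge0.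
  apply: mulr_ge0; first exact: ler0n.
  by apply: mulr_ge0; [exact: ler0n|apply: sumr_ge0].
- move=> w; rewrite (V_Fz w s s' Ts hs); apply: Fz_bound.
  exact: trans_substoch.
move=> N hN.
exists (fun be : {ffun S -> {ffun A * S -> 'I_N.+1}} => Fz s s' (fun x a y => (be x (a, y) : nat)%:R / N%:R)) => w.
have E : Fz s s' (fun x a y => (crest P s N w x (a, y) : nat)%:R / N%:R) =
         Fz s s' (discP N w).
  rewrite /Fz; apply: eq_bigr => h _; congr (_ * iter _ (step pi _) _ _).
  apply: funext => x; apply: funext => a; apply: funext => y.
  rewrite /zero; case: eqP => // /eqP xs.
  by rewrite /crest ffunE (negbTE xs) /rowcell ffunE.
rewrite E (V_Fz w s s' Ts hs); split; last first.
  by apply: Fz_bound; exact: substoch_disc.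
apply: Fz_lip => //; [exact: trans_substoch|exact: substoch_disc|].
move=> x a y; have [h1 h2 h3] := disc_bounds hN _ (P01 hP w x a y).
by rewrite /discP ger0_norm // subr_ge0.
Qed.

Lemma good_sq (f : Om -> R) : good f -> good (fun w => f w ^+ 2).
Proof. by move=> hf; apply: good_mul. Qed.

Lemma F3 s a s' :
  Ex Pr (fun w => P w s a s' * value r gamma pi (P w) s') =
    Ex Pr (fun w => P w s a s') * Ex Pr (fun w => value r gamma pi (P w) s') /\
  Ex Pr (fun w => P w s a s' * value r gamma pi (P w) s' ^+ 2) =
    Ex Pr (fun w => P w s a s') * Ex Pr (fun w => value r gamma pi (P w) s' ^+ 2).
Proof.
have gV := good_V s'; have gV2 := good_sq _ gV.
case Ts: (T s).
  have hc : forall w, P w s a s' = (s' == s)%:R.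
    by move=> w; exact: (term_row (hP w) (hTw w) a s' Ts).
  by split; apply: (F3_const _ _ _ _ hc).
case: (ltnP (rho s') (rho s)) => hs; last first.
  have hc : forall w, P w s a s' = 0.
    move=> w; have := (proj1 (hP w)) s a s'.
    rewrite le_eqVlt => /orP[/eqP <- //|pos].
    by have := hrho w s a s' (negbT Ts) pos; rewrite ltnNge hs.
  by split; apply: (F3_const _ _ _ _ hc).
have [Cy [Mv [Cy0 hMv happ]]] := core_approx s s' (negbT Ts) hs.
have hX N (hN : (0 < N)%N) w :
    `|P w s a s' - (rowcell P N w s (a, s') : nat)%:R / N%:R| <= N%:R^-1.
  rewrite /rowcell ffunE /=.
  have [h1 h2 h3] := disc_bounds hN _ (P01 hP w s a s').
  by rewrite ger0_norm ?subr_ge0.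
have Np N : (0 < N)%N -> 0 < (N%:R : R) by move=> hN; rewrite ltr0n.
split.
  apply: (indep_approx hmP hP hind (C := 1 + Cy)) => //.
  - exact: good_P.
  - by rewrite addr_ge0.
  move=> N hN; have [g hg] := happ N hN.
  exists (fun al : {ffun A * S -> 'I_N.+1} => (al (a, s') : nat)%:R / N%:R), g => w.
  split.
    apply: le_trans (hX N hN w) _; rewrite mulrDl mul1r lerDl.
    by apply: divr_ge0 => //; exact: ler0n.
  apply: le_trans (proj1 (hg w)) _; rewrite mulrDl mul1r lerDr.
  by rewrite invr_ge0 ler0n.
apply: (indep_approx hmP hP hind (C := 1 + Cy * (2 * `|Mv|))) => //.
- exact: good_P.
- by rewrite addr_ge0 // mulr_ge0 // mulr_ge0.
move=> N hN; have [g hg] := happ N hN.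
exists (fun al : {ffun A * S -> 'I_N.+1} => (al (a, s') : nat)%:R / N%:R).
exists (fun be => g be ^+ 2) => w.
split.
  apply: le_trans (hX N hN w) _; rewrite mulrDl mul1r lerDl.
  apply: divr_ge0; last exact: ler0n.
  by rewrite mulr_ge0 // mulr_ge0.
have [h1 h2] := hg w.
rewrite subr_sqr normrM.
apply: (@le_trans _ _ (Cy / N%:R * (2 * `|Mv|))).
  apply: ler_pM => //.
  apply: le_trans (ler_normD _ _) _; rewrite mulr2n mulrDl mul1r.
  apply: lerD; apply: le_trans (ler_norm Mv); [exact: hMv|exact: h2].
have -> : (1 + Cy * (2 * `|Mv|)) / N%:R = N%:R^-1 + Cy / N%:R * (2 * `|Mv|) by ring.
by rewrite lerDr invr_ge0 ler0n.
Qed.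

Lemma main_eq :
  let pbar : trans R S A := fun s a s' => Ex Pr (fun w => P w s a s') in
  let Vbar : S -> R := fun s => Ex Pr (fun w => value r gamma pi (P w) s) in
  let U : S -> R := fun s => Var Pr (fun w => value r gamma pi (P w) s) in
  let u : S -> R := fun s =>
    locvar pi pbar Vbar s - Ex Pr (fun w => locvar pi (P w) (value r gamma pi (P w)) s) in
  forall s : S,
    U s = gamma ^+ 2 * u s
          + gamma ^+ 2 * \sum_(a : A) \sum_(s' : S) pi s a * pbar s a s' * U s'.
Proof.
move=> pbar Vbar U u s.
set Ex2 := fun x => Ex Pr (fun w => value r gamma pi (P w) x ^+ 2).
set W := fun w => step pi (P w) (value r gamma pi (P w)) s.
have gW : good W.
  apply: good_sum => a; apply: good_mul; first exact: good_cst.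
  apply: good_sum => s'; apply: good_mul; [exact: good_P|exact: good_V].
have gW' : good (fun w => step pi (P w) (fun x => value r gamma pi (P w) x ^+ 2) s).
  apply: good_sum => a; apply: good_mul; first exact: good_cst.
  apply: good_sum => s'; apply: good_mul; [exact: good_P|apply: good_sq; exact: good_V].
have EW : Ex Pr W = step pi pbar Vbar s.
  rewrite /W /step Ex_sum; last first.
    move=> a; apply: good_mul; first exact: good_cst.
    apply: good_sum => s'; apply: good_mul; [exact: good_P|exact: good_V].
  apply: eq_bigr => a _; rewrite Ex_scal; last first.
    apply: good_sum => s'; apply: good_mul; [exact: good_P|exact: good_V].
  rewrite Ex_sum; last by move=> s'; apply: good_mul; [exact: good_P|exact: good_V].
  by congr (_ * _); apply: eq_bigr => s' _; rewrite (proj1 (F3 s a s')).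
have EW2 : Ex Pr (fun w => step pi (P w) (fun x => value r gamma pi (P w) x ^+ 2) s)
    = \sum_a pi s a * \sum_s' pbar s a s' * Ex2 s'.
  rewrite /step Ex_sum; last first.
    move=> a; apply: good_mul; first exact: good_cst.
    apply: good_sum => s'; apply: good_mul; [exact: good_P|apply: good_sq; exact: good_V].
  apply: eq_bigr => a _; rewrite Ex_scal; last first.
    apply: good_sum => s'; apply: good_mul; [exact: good_P|apply: good_sq; exact: good_V].
  rewrite Ex_sum; last first.
    by move=> s'; apply: good_mul; [exact: good_P|apply: good_sq; exact: good_V].
  by congr (_ * _); apply: eq_bigr => s' _; rewrite (proj2 (F3 s a s')).
have EL : Ex Pr (fun w => locvar pi (P w) (value r gamma pi (P w)) s) =
    (\sum_a pi s a * \sum_s' pbar s a s' * Ex2 s') - Ex Pr (fun w => W w ^+ 2).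
  by rewrite /locvar Ex_sub //; [rewrite EW2|exact: good_sq].
have Us' : forall x, U x = Ex2 x - Vbar x ^+ 2.
  by move=> x; rewrite /U Var_eq //; exact: good_V.
have hVs : forall w, value r gamma pi (P w) s = rpi r pi s + gamma * W w.
  by move=> w; exact: V_bellman.
have EV : Vbar s = rpi r pi s + gamma * Ex Pr W.
  rewrite /Vbar (Ex_ext Pr hVs) Ex_add; [|exact: good_cst|].
    by rewrite Ex_cst Ex_scal.
  by apply: good_mul; [exact: good_cst|].
have EV2 : Ex2 s = rpi r pi s ^+ 2 + 2 * rpi r pi s * gamma * Ex Pr W
                   + gamma ^+ 2 * Ex Pr (fun w => W w ^+ 2).
  rewrite /Ex2.
  rewrite (Ex_ext Pr (g := fun w => (rpi r pi s ^+ 2 + (2 * rpi r pi s * gamma) * W w)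
                              + gamma ^+ 2 * (W w ^+ 2))); last first.
    by move=> w; rewrite hVs; ring.
  rewrite Ex_add; last first.
  - by apply: good_mul; [exact: good_cst|exact: good_sq].
  - by apply: good_add; [exact: good_cst|apply: good_mul; [exact: good_cst|]].
  rewrite Ex_add; [|exact: good_cst|by apply: good_mul; [exact: good_cst|]].
  by rewrite Ex_cst !Ex_scal //; exact: good_sq.
have US : U s = gamma ^+ 2 * (Ex Pr (fun w => W w ^+ 2) - Ex Pr W ^+ 2).
  by rewrite Us' EV2 EV; ring.
have SU : \sum_a \sum_s' pi s a * pbar s a s' * U s' =
    (\sum_a pi s a * \sum_s' pbar s a s' * Ex2 s') - step pi pbar (fun x => Vbar x ^+ 2) s.
  rewrite /step -sumrB; apply: eq_bigr => a _.
  rewrite -mulrBr -sumrB mulr_sumr; apply: eq_bigr => s' _.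
  by rewrite Us'; ring.
rewrite US SU /u EL /locvar -EW; ring.
Qed.

End Main.

Theorem theorem1 (R : realType) (S A : finType) (r : S -> A -> R) (gamma : R)
  (d : measure_display) (Om : measurableType d) (Pr : probability Om R)
  (P : Om -> trans R S A) :
  0 <= gamma < 1 ->
  (forall s a s', measurable_fun setT (fun w => P w s a s')) ->
  (forall w, is_trans (P w)) ->
  indep_rows Pr P ->
  acyclic r P ->
  forall (pi : policy R S A), is_policy pi ->
  let pbar : trans R S A := fun s a s' => Ex Pr (fun w => P w s a s') in
  let Vbar : S -> R := fun s => Ex Pr (fun w => value r gamma pi (P w) s) in
  let U : S -> R := fun s => Var Pr (fun w => value r gamma pi (P w) s) in
  let u : S -> R := fun s =>
    locvar pi pbar Vbar s - Ex Pr (fun w => locvar pi (P w) (value r gamma pi (P w)) s) in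
  forall s : S,
    U s = gamma ^+ 2 * u s
          + gamma ^+ 2 * \sum_(a : A) \sum_(s' : S) pi s a * pbar s a s' * U s'.
Proof.
move=> _ hmP hP hind [rho [T [hT hrho]]] pi hpi.
pose K := (\max_s rho s).+1.
have hK : forall s, (rho s < K)%N by move=> s; rewrite ltnS; exact: leq_bigmax.
exact: (main_eq R d Om Pr S A r gamma pi hpi P hmP hP hind rho T hT hrho K hK).
Qed.
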